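(* Let $\Omega$ be a countably infinite set and $G$ a subgroup of $S=\mathrm{Sym}(\Omega)$ not contained in $S^{\mathrm{finite}}$. Then for every subgroup $H\le S$, $H\preccurlyeq^{\mathrm{cj}}G$ if and only if $H\preccurlyeq G$. Moreover, if $G$ is uncountable, then for every subgroup $H\le S$, $H\approx^{\mathrm{cj}}G$ if and only if $H\approx G$.
   Context: $\mathrm{Sym}(\Omega)$ is the group of all permutations of $\Omega$; $S^{\mathrm{finite}}$ is the normal subgroup of permutations moving only finitely many points. For subgroups $G_1,G_2\le S$: $G_1\preccurlyeq G_2$ means there is a finite $U\subseteq S$ with $G_1\le\langle G_2\cup U\rangle$; $G_1\preccurlyeq^{\mathrm{cj}}G_2$ means there is a finite $U\subseteq S$ with $G_1\le\langle\bigcup_{f\in U}f^{-1}G_2f\rangle$; $\approx$ and $\approx^{\mathrm{cj}}$ denote the corresponding symmetric relations (each direction holding). *)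

(* Defs.v *)
From Stdlib Require Import List.
Import ListNotations.
Set Implicit Arguments.

Section SymDefs.
Variable T : Type.

Definition is_perm (f : T -> T) : Prop :=
  exists g : T -> T, (forall x, g (f x) = x) /\ (forall x, f (g x) = x).

Definition fset := (T -> T) -> Prop.

Definition subset (A B : fset) : Prop := forall f, A f -> B f.

Definition subgroup (K : fset) : Prop :=
  (forall f, K f -> is_perm f) /\
  K (fun x => x) /\
  (forall f g, K f -> K g -> K (fun x => f (g x))) /\
  (forall f g, K f -> (forall x, g (f x) = x) -> (forall x, f (g x) = x) -> K g).

Definition gen (A : fset) : fset :=
  fun f => forall K, subgroup K -> subset A K -> K f.

Definition finitary (f : T -> T) : Prop :=
  is_perm f /\ exists l : list T, forall x, f x <> x -> In x l.

Definition preceq (G1 G2 : fset) : Prop :=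
  exists U : list (T -> T), (forall u, In u U -> is_perm u) /\
    subset G1 (gen (fun h => G2 h \/ In h U)).

(* G1 ≼^cj G2 : exists finite U ⊆ S with G1 ≤ < ∪_{f∈U} f^{-1} G2 f >. *)
Definition preceq_cj (G1 G2 : fset) : Prop :=
  exists U : list (T -> T), (forall u, In u U -> is_perm u) /\
    subset G1 (gen (fun h => exists f finv g, In f U /\
        (forall x, finv (f x) = x) /\ (forall x, f (finv x) = x) /\
        G2 g /\ h = (fun x => finv (g (f x))))).

Definition approx (G1 G2 : fset) : Prop := preceq G1 G2 /\ preceq G2 G1.
Definition approx_cj (G1 G2 : fset) : Prop := preceq_cj G1 G2 /\ preceq_cj G2 G1.

Definition countable_set (A : fset) : Prop :=
  exists e : nat -> (T -> T), forall f, A f -> exists n, e n = f.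

Definition countably_infinite : Prop :=
  exists e : T -> nat, exists d : nat -> T,
    (forall x, d (e x) = x) /\ (forall n, e (d n) = n).

End SymDefs.

(* Main.v *)
Require Import Defs.
From Stdlib Require Import List Arith Lia Classical ClassicalEpsilon FunctionalExtensionality Cantor.
Import ListNotations.


Definition inv_pair (f fi : nat -> nat) := (forall x, fi (f x) = x) /\ (forall x, f (fi x) = x).

Inductive NC (g : nat -> nat) : (nat -> nat) -> Prop :=
| NCconj : forall f fi, inv_pair f fi -> NC g (fun x => fi (g (f x)))
| NCinv : forall h hi, NC g h -> inv_pair h hi -> NC g hi
| NCcomp : forall h k, NC g h -> NC g k -> NC g (fun x => h (k x)).

Lemma NC_ext g h h' : NC g h -> (forall x, h x = h' x) -> NC g h'.
Proof. intros H E. replace h' with h; auto. apply functional_extensionality; auto. Qed.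

Lemma NC_normal g h c ci : NC g h -> inv_pair c ci -> NC g (fun x => ci (h (c x))).
Proof.
  intros H [c1 c2]. induction H.
  - destruct H as [f1 f2].
    apply (NCconj g (fun x => f (c x)) (fun x => ci (fi x))). split; intros x.
    + rewrite f1, c1; auto. + rewrite c2, f2; auto.
  - apply (NCinv g _ _ IHNC). destruct H0 as [h1 h2]. split; intros x.
    + rewrite c2, h1, c1; auto. + rewrite c2, h2, c1; auto.
  - eapply NC_ext. apply (NCcomp g _ _ IHNC1 IHNC2). intros x; simpl. rewrite c2; auto.
Qed.

Lemma NC_g g gi : inv_pair g gi -> NC g g.
Proof. intros _. apply (NCconj g (fun x => x) (fun x => x)). split; auto. Qed.

Lemma NC_gi g gi : inv_pair g gi -> NC g gi.
Proof. intros H. apply (NCinv g g gi (NC_g g gi H) H). Qed.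

Definition inf (X : nat -> Prop) := forall N, exists x, N <= x /\ X x.
Definition supp_in (S : nat -> Prop) (s : nat -> nat) := forall x, s x <> x -> S x.
Definition good (S : nat -> Prop) := inf S /\ inf (fun x => ~ S x).

Definition dec (P : Prop) : {P}+{~P} := excluded_middle_informative P.

Lemma least_ex (P : nat -> Prop) : (exists x, P x) -> exists x, P x /\ forall y, P y -> x <= y.
Proof.
  intros [x0 Hx0]. apply NNPP; intros Hn.
  assert (forall n, forall x, x <= n -> ~ P x).
  { induction n; intros x Hx Px.
    - apply Hn. exists x; split; auto. intros; lia.
    - apply Hn. exists x. split; auto. intros y Py.
      destruct (le_lt_dec x y); auto. exfalso. apply (IHn y); [lia|auto]. }
  apply (H x0 x0); auto.
Qed.

Section Enum.
Variable X : nat -> Prop.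
Hypothesis HX : inf X.

Definition nxt (n : nat) : nat :=
  epsilon (inhabits 0) (fun x => n <= x /\ X x /\ forall y, n <= y -> X y -> x <= y).

Lemma nxt_spec n : n <= nxt n /\ X (nxt n) /\ forall y, n <= y -> X y -> nxt n <= y.
Proof.
  unfold nxt. apply epsilon_spec.
  destruct (least_ex (fun x => n <= x /\ X x)) as [x [[H1 H2] H3]].
  - destruct (HX n) as [x [? ?]]. eauto.
  - exists x. repeat split; auto.
Qed.

Fixpoint en (k : nat) : nat := match k with 0 => nxt 0 | S k => nxt (S (en k)) end.

Lemma en_in k : X (en k).
Proof. destruct k; simpl; apply nxt_spec. Qed.

Lemma en_lt k : en k < en (S k).
Proof. simpl. destruct (nxt_spec (S (en k))) as [? _]. lia. Qed.

Lemma en_mono i j : i < j -> en i < en j.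
Proof.
  intros H. induction H. apply en_lt. pose proof (en_lt m). lia.
Qed.

Lemma en_ge k : k <= en k.
Proof. induction k. lia. pose proof (en_lt k). lia. Qed.

Lemma en_inj i j : en i = en j -> i = j.
Proof.
  intros E. destruct (lt_eq_lt_dec i j) as [[H|H]|H]; auto;
  pose proof (en_mono _ _ H); lia.
Qed.

Lemma en_surj y : X y -> exists k, en k = y.
Proof.
  intros Hy.
  destruct (least_ex (fun k => y <= en k)) as [k [H1 H2]].
  { exists y. apply en_ge. }
  exists k. destruct k.
  - simpl in *. destruct (nxt_spec 0) as [_ [_ H3]]. specialize (H3 y (Nat.le_0_l _) Hy). lia.
  - assert (en k < y). { destruct (le_lt_dec y (en k)); auto. specialize (H2 k l). lia. }
    simpl in *. destruct (nxt_spec (S (en k))) as [_ [_ H3]].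
    specialize (H3 y ltac:(lia) Hy). lia.
Qed.

Definition idx (y : nat) : nat := epsilon (inhabits 0) (fun k => en k = y).

Lemma en_idx y : X y -> en (idx y) = y.
Proof. intros Hy. unfold idx. apply epsilon_spec. apply en_surj; auto. Qed.

Lemma idx_en k : idx (en k) = k.
Proof. apply en_inj. apply en_idx. apply en_in. Qed.

End Enum.

Lemma glue (A B : nat -> Prop) phi psi :
  inf (fun x => ~ A x) -> inf (fun x => ~ B x) ->
  (forall x, A x -> B (phi x)) -> (forall y, B y -> A (psi y)) ->
  (forall x, A x -> psi (phi x) = x) -> (forall y, B y -> phi (psi y) = y) ->
  exists al ali, inv_pair al ali /\ (forall x, A x -> al x = phi x) /\
     (forall x, ~ A x -> ~ B (al x)).
Proof.
  intros IA IB H1 H2 H3 H4.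
  set (CA := fun x => ~ A x) in *. set (CB := fun x => ~ B x) in *.
  exists (fun x => if dec (A x) then phi x else en CB (idx CA x)).
  exists (fun y => if dec (B y) then psi y else en CA (idx CB y)).
  split; [split|split].
  - intros x. destruct (dec (A x)) as [a|a].
    + destruct (dec (B (phi x))) as [b|b]; [auto|exfalso; auto].
    + destruct (dec (B (en CB (idx CA x)))) as [b|b].
      * exfalso. apply (en_in CB IB (idx CA x)); auto.
      * rewrite idx_en by auto. apply en_idx; auto.
  - intros y. destruct (dec (B y)) as [b|b].
    + destruct (dec (A (psi y))) as [a|a]; [auto|exfalso; auto].
    + destruct (dec (A (en CA (idx CB y)))) as [a|a].
      * exfalso. apply (en_in CA IA (idx CB y)); auto.
      * rewrite idx_en by auto. apply en_idx; auto.
  - intros x Ax. destruct (dec (A x)); [auto|contradiction].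
  - intros x Ax. destruct (dec (A x)); [contradiction|]. apply (en_in CB IB).
Qed.


Lemma transfer g (D : nat -> Prop) : good D ->
  (forall t ti, inv_pair t ti -> supp_in D t -> NC g t) ->
  forall S, good S -> forall s si, inv_pair s si -> supp_in S s -> NC g s.
Proof.
  intros [ID ID'] HD S [IS IS'] s si Hs Ss.
  destruct (glue S D (fun x => en D (idx S x)) (fun y => en S (idx D y)) IS' ID')
    as [f [fi [[f1 f2] [F1 F2]]]].
  - intros; apply en_in; auto.
  - intros; apply en_in; auto.
  - intros x Hx. rewrite idx_en by auto. apply en_idx; auto.
  - intros x Hx. rewrite idx_en by auto. apply en_idx; auto.
  - assert (NC g (fun y => f (s (fi y)))).
    { destruct Hs as [s1 s2]. apply (HD _ (fun y => f (si (fi y)))).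
      - split; intros; rewrite ?f1, ?s1, ?s2, ?f2; auto.
      - intros y Hy. apply NNPP; intros Hn.
        apply Hy. destruct (dec (S (fi y))) as [a|a].
        + exfalso. apply Hn. rewrite <- (f2 y). rewrite F1 by auto. apply en_in; auto.
        + assert (s (fi y) = fi y). { apply NNPP; intros E. apply a, Ss, E. }
          rewrite H. auto. }
    eapply NC_ext. apply (NC_normal g _ f fi H). split; auto.
    intros x; simpl. rewrite f1, f1. auto.
Qed.

Fixpoint sumto (f : nat -> nat) (n : nat) : nat :=
  match n with 0 => f 0 | S n => sumto f n + f (S n) end.

Lemma sumto_ge f n y : y <= n -> f y <= sumto f n.
Proof.
  induction n; intros H; simpl.
  - assert (y = 0) by lia. subst; lia.
  - destruct (Nat.eq_dec y (S n)). subst; lia. specialize (IHn ltac:(lia)). lia.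
Qed.

Section Decomp.
Variables p pi : nat -> nat.
Hypothesis Hp : inv_pair p pi.

Definition xf M := S (M + sumto pi M).
Lemma xf_gt M : M < xf M.
Proof. unfold xf; lia. Qed.
Lemma pxf_gt M : M < p (xf M).
Proof.
  destruct (le_lt_dec (p (xf M)) M) as [H|H]; auto.
  pose proof (sumto_ge pi M _ H). destruct Hp as [h1 _]. rewrite h1 in H0.
  unfold xf in H0. lia.
Qed.
Definition yf M := S (Nat.max (xf M) (p (xf M))).
Definition zf M := S (yf M).
Fixpoint Ms k := match k with 0 => 0 | S k => zf (Ms k) end.
Definition xs k := xf (Ms k).
Definition ys k := yf (Ms k).
Definition zs k := zf (Ms k).

Lemma step k : Ms k < xs k /\ Ms k < p (xs k) /\ xs k < ys k /\ p (xs k) < ys k /\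
   ys k < zs k /\ zs k = Ms (S k).
Proof.
  unfold xs, ys, zs, yf, zf; cbn [Ms]. pose proof (xf_gt (Ms k)). pose proof (pxf_gt (Ms k)).
  repeat split; try lia; try reflexivity; unfold yf; lia.
Qed.

Lemma Ms_mono i j : i < j -> Ms (S i) <= Ms j.
Proof.
  intros H; induction H; auto. pose proof (step m) as (?&?&?&?&?&?). lia.
Qed.
Lemma Ms_ge k : k <= Ms k.
Proof. induction k; simpl; auto. pose proof (step k) as (?&?&?&?&?&?). unfold zs in *; simpl in *. lia. Qed.

Lemma same_step i j a b : Ms i < a <= Ms (S i) -> Ms j < b <= Ms (S j) -> a = b -> i = j.
Proof.
  intros Ha Hb E. subst. destruct (lt_eq_lt_dec i j) as [[H|H]|H]; auto.
  - pose proof (Ms_mono _ _ H); lia.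
  - pose proof (Ms_mono _ _ H); lia.
Qed.

Definition Xs y := exists k, y = xs k.
Definition Ys y := exists k, y = ys k.
Definition PXs y := exists k, y = p (xs k).

Ltac stp i := let H := fresh in pose proof (step i) as H; destruct H as (?&?&?&?&?&?).

Lemma XY x : Xs x -> Ys x -> False.
Proof.
  intros [i ->] [j E]. stp i. stp j. assert (i = j) by (apply (same_step i j (xs i) (ys j)); lia).
  subst; lia.
Qed.
Lemma PY x : PXs x -> Ys x -> False.
Proof.
  intros [i ->] [j E]. stp i. stp j. assert (i = j) by (apply (same_step i j (p (xs i)) (ys j)); lia).
  subst; lia.
Qed.
Lemma ZX k : Xs (zs k) -> False.
Proof. intros [j E]. stp j. stp k. assert (k = j) by (apply (same_step k j (zs k) (xs j)); lia). subst; lia. Qed.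
Lemma ZY k : Ys (zs k) -> False.
Proof. intros [j E]. stp j. stp k. assert (k = j) by (apply (same_step k j (zs k) (ys j)); lia). subst; lia. Qed.
Lemma ZP k : PXs (zs k) -> False.
Proof. intros [j E]. stp j. stp k. assert (k = j) by (apply (same_step k j (zs k) (p (xs j))); lia). subst; lia. Qed.

Lemma decomp : exists al ali be bei, inv_pair al ali /\ inv_pair be bei /\
  (forall x, p x = al (be x)) /\ (exists S, good S /\ supp_in S al) /\
  (exists S, good S /\ supp_in S be).
Proof.
  destruct Hp as [p1 p2].
  destruct (glue (fun x => Xs x \/ Ys x) (fun x => PXs x \/ Ys x)
     (fun x => if dec (Xs x) then p x else x) (fun y => if dec (PXs y) then pi y else y))
    as [al [ali [[a1 a2] [A1 A2]]]].
  - intros N. exists (zs N). split. pose proof (Ms_ge N); stp N; lia.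
    intros [H|H]; [eapply ZX|eapply ZY]; eauto.
  - intros N. exists (zs N). split. pose proof (Ms_ge N); stp N; lia.
    intros [H|H]; [eapply ZP|eapply ZY]; eauto.
  - intros x Hx; destruct (dec (Xs x)) as [[k ->]|a]. left; exists k; auto.
    destruct Hx; [contradiction|right; auto].
  - intros y Hy; destruct (dec (PXs y)) as [[k ->]|a]. left; exists k; auto.
    destruct Hy; [contradiction|right; auto].
  - intros x [H|H]; destruct (dec (Xs x)) as [a|a].
    + destruct (dec (PXs (p x))) as [b|b]; auto. exfalso; apply b.
      destruct a as [k ->]; exists k; auto.
    + contradiction.
    + exfalso; eapply XY; eauto.
    + destruct (dec (PXs x)) as [b|b]; auto. exfalso; eapply PY; eauto.
  - intros y [H|H]; destruct (dec (PXs y)) as [a|a].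
    + destruct (dec (Xs (pi y))) as [b|b]; auto. exfalso; apply b.
      destruct a as [k ->]; exists k; auto.
    + contradiction.
    + exfalso; eapply PY; eauto.
    + destruct (dec (Xs y)) as [b|b]; auto. exfalso; eapply XY; eauto.
  - exists al, ali, (fun x => ali (p x)), (fun x => pi (al x)).
    split; [split; auto|split; [split|split; [|split]]].
    + intros x; rewrite a2, p1; auto.
    + intros x; rewrite p2, a1; auto.
    + intros x; rewrite a2; auto.
    + exists (fun x => ~ Ys x). split; [split|].
      * intros N. exists (xs N). split. pose proof (Ms_ge N); stp N; lia.
        intros H. eapply XY; eauto. exists N; auto.
      * intros N. exists (ys N). split. pose proof (Ms_ge N); stp N; lia.
        intros H; apply H. exists N; auto.
      * intros x Hx Hy. apply Hx. rewrite A1 by auto. destruct (dec (Xs x)); auto.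
        exfalso; eapply XY; eauto.
    + exists (fun x => ~ Xs x). split; [split|].
      * intros N. exists (ys N). split. pose proof (Ms_ge N); stp N; lia.
        intros H. eapply XY; eauto. exists N; auto.
      * intros N. exists (xs N). split. pose proof (Ms_ge N); stp N; lia.
        intros H; apply H. exists N; auto.
      * intros x Hx Hy. apply Hx.
        assert (E : al x = p x) by (rewrite A1 by auto; destruct (dec (Xs x)); [auto|contradiction]).
        rewrite <- E, a1; auto.
Qed.
End Decomp.


Definition sh n := if Nat.even n then S (S n) else if n =? 1 then 0 else n - 2.
Definition shi n := if Nat.even n then (if n =? 0 then 1 else n - 2) else S (S n).
Lemma sh_shi n : sh (shi n) = n.
Proof.
  unfold sh, shi. destruct n as [|[|k]]; [reflexivity|reflexivity|].
  change (Nat.even (S (S k))) with (Nat.even k).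
  destruct (Nat.even k) eqn:E; cbn -[Nat.even]; rewrite ?Nat.sub_0_r, ?E; try reflexivity.
  change (Nat.even (S (S (S (S k))))) with (Nat.even k); rewrite E; reflexivity.
Qed.
Lemma shi_sh n : shi (sh n) = n.
Proof.
  unfold sh, shi. destruct n as [|[|k]]; [reflexivity|reflexivity|].
  change (Nat.even (S (S k))) with (Nat.even k).
  destruct (Nat.even k) eqn:E; cbn -[Nat.even]; rewrite ?Nat.sub_0_r, ?E; try reflexivity.
  change (Nat.even (S (S (S (S k))))) with (Nat.even k); rewrite E; reflexivity.
Qed.
Lemma even_shi n : n <> 0 -> Nat.even (shi n) = Nat.even n.
Proof.
  intros H. unfold shi. destruct n as [|[|k]]; [lia|reflexivity|].
  change (Nat.even (S (S k))) with (Nat.even k).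
  destruct (Nat.even k) eqn:E; cbn -[Nat.even]; rewrite ?Nat.sub_0_r; auto.
Qed.

Section Swindle.
Variables g gi a : nat -> nat.
Hypothesis Hg : inv_pair g gi.
Hypothesis Ha : forall i j, i < j -> a i < a j.
Hypothesis Hdisj : forall i j, g (a i) <> a j.

Lemma a_inj i j : a i = a j -> i = j.
Proof. intros E. destruct (lt_eq_lt_dec i j) as [[H|H]|H]; auto; pose proof (Ha _ _ H); lia. Qed.

Definition inB y := exists k, a k = y.
Definition ix y := epsilon (inhabits 0) (fun k => a k = y).
Definition Ap (q : nat * nat) := a (to_nat q).
Definition lift (F : nat * nat -> nat * nat) y :=
  if dec (inB y) then Ap (F (of_nat (ix y))) else y.

Lemma ix_a k : ix (a k) = k.
Proof. apply a_inj. unfold ix. apply epsilon_spec. eauto. Qed.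
Lemma Ap_inj q q' : Ap q = Ap q' -> q = q'.
Proof. unfold Ap; intros E. apply a_inj in E. rewrite <- (cancel_of_to q), E. apply cancel_of_to. Qed.
Lemma inB_Ap q : inB (Ap q).
Proof. exists (to_nat q); auto. Qed.
Lemma lift_Ap F q : lift F (Ap q) = Ap (F q).
Proof.
  unfold lift. destruct (dec (inB (Ap q))) as [_|n]. unfold Ap at 2. rewrite ix_a, cancel_of_to; auto.
  exfalso; apply n, inB_Ap.
Qed.
Lemma lift_out F y : ~ inB y -> lift F y = y.
Proof. unfold lift; intros H; destruct (dec (inB y)); tauto. Qed.
Lemma inB_Ap_ex y : inB y -> exists q, y = Ap q.
Proof. intros [k <-]. exists (of_nat k). unfold Ap; rewrite cancel_to_of; auto. Qed.

Lemma lift_inv F Fi : (forall q, F (Fi q) = q) -> (forall q, Fi (F q) = q) ->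
  inv_pair (lift F) (lift Fi).
Proof.
  intros H1 H2. split; intros y; destruct (dec (inB y)) as [b|b].
  - destruct (inB_Ap_ex y b) as [q ->]. rewrite !lift_Ap, H2; auto.
  - rewrite (lift_out F y b), (lift_out Fi y b); auto.
  - destruct (inB_Ap_ex y b) as [q ->]. rewrite !lift_Ap, H1; auto.
  - rewrite (lift_out Fi y b), (lift_out F y b); auto.
Qed.

Definition sg := lift (fun q => (sh (fst q), snd q)).
Definition sgi := lift (fun q => (shi (fst q), snd q)).
Lemma sg_inv : inv_pair sg sgi.
Proof. apply lift_inv; intros [n m]; simpl; rewrite ?sh_shi, ?shi_sh; auto. Qed.
Lemma sgi_inv : inv_pair sgi sg.
Proof. destruct sg_inv; split; auto. Qed.

Definition hh y := sg (g (sgi (gi y))).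
Definition hhi y := g (sg (gi (sgi y))).
Lemma hh_inv : inv_pair hh hhi.
Proof.
  destruct sg_inv as [s1 s2]; destruct Hg as [g1 g2]. unfold hh, hhi.
  split; intros; repeat rewrite ?s1, ?s2, ?g1, ?g2; auto.
Qed.
Lemma NC_hh : NC g hh.
Proof.
  eapply NC_ext. apply (NCcomp g _ _ (NCconj g sgi sg sgi_inv) (NC_gi g gi Hg)).
  intros; reflexivity.
Qed.
Lemma hh_Ap q : hh (Ap q) = Ap (sh (fst q), snd q).
Proof.
  unfold hh. assert (~ inB (gi (Ap q))).
  { intros [k E]. apply (Hdisj k (to_nat q)). rewrite E. apply Hg. }
  unfold sgi at 1. rewrite lift_out by auto. destruct Hg as [_ g2]. rewrite g2.
  unfold sg. rewrite lift_Ap. auto.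
Qed.
Lemma hhi_Ap n m : hhi (Ap (n, m)) = Ap (shi n, m).
Proof.
  rewrite <- (sh_shi n) at 1. replace (Ap (sh (shi n), m)) with (hh (Ap (shi n, m))).
  apply hh_inv. rewrite hh_Ap; auto.
Qed.
Lemma hhi_out y : ~ inB y -> ~ inB (hhi y).
Proof.
  intros H1 H2. apply H1. destruct (inB_Ap_ex _ H2) as [q E].
  rewrite <- (proj2 hh_inv y), E, hh_Ap. apply inB_Ap.
Qed.

Definition DD y := exists m, y = Ap (0, m).

Lemma swindle t ti : inv_pair t ti -> supp_in DD t -> NC g t.
Proof.
  intros [t1 t2] St.
  assert (Sti : supp_in DD ti).
  { intros y Hy. apply NNPP; intros Hn. apply Hy.
    assert (t y = y) by (apply NNPP; intros E; apply Hn, St, E).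
    rewrite <- H at 1. auto. }
  assert (keep : forall s, supp_in DD s -> (forall x y, s x = s y -> x = y) ->
     forall m, exists m', s (Ap (0, m)) = Ap (0, m')).
  { intros s Ss Si m. destruct (dec (DD (s (Ap (0, m))))) as [[m' E]|n]. eauto.
    exfalso. apply n. assert (s (s (Ap (0,m))) = s (Ap (0, m))).
    { apply NNPP; intros E; apply n, Ss, E. }
    apply Si in H. rewrite H. exists m; auto. }
  set (rho := fun m => snd (of_nat (ix (t (Ap (0, m)))))).
  set (rhoi := fun m => snd (of_nat (ix (ti (Ap (0, m)))))).
  assert (tA : forall m, t (Ap (0, m)) = Ap (0, rho m)).
  { intros m. destruct (keep t St (fun x y E => eq_trans (eq_sym (t1 x)) (eq_trans (f_equal ti E) (t1 y))) m) as [m' E].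
    unfold rho. rewrite E. unfold Ap at 3. rewrite ix_a, cancel_of_to. auto. }
  assert (tiA : forall m, ti (Ap (0, m)) = Ap (0, rhoi m)).
  { intros m. destruct (keep ti Sti (fun x y E => eq_trans (eq_sym (t2 x)) (eq_trans (f_equal t E) (t2 y))) m) as [m' E].
    unfold rhoi. rewrite E. unfold Ap at 3. rewrite ix_a, cancel_of_to. auto. }
  assert (r1 : forall m, rho (rhoi m) = m).
  { intros m. pose proof (t2 (Ap (0, m))). rewrite tiA, tA in H. apply Ap_inj in H. congruence. }
  assert (r2 : forall m, rhoi (rho m) = m).
  { intros m. pose proof (t1 (Ap (0, m))). rewrite tA, tiA in H. apply Ap_inj in H. congruence. }
  set (Fe := fun q : nat * nat => if Nat.even (fst q) then (fst q, rho (snd q)) else q).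
  set (Fei := fun q : nat * nat => if Nat.even (fst q) then (fst q, rhoi (snd q)) else q).
  assert (TI : inv_pair (lift Fei) (lift Fe)).
  { apply lift_inv; intros [n m]; unfold Fe, Fei; simpl; destruct (Nat.even n) eqn:E; simpl;
      rewrite ?E, ?r1, ?r2; auto. }
  assert (NCT : NC g (fun x => lift Fe (hh (lift Fei x)))) by (apply NC_normal; auto; apply NC_hh).
  eapply NC_ext. apply (NCcomp g _ _ NCT (NCinv g _ _ NC_hh hh_inv)).
  intros y. simpl. destruct (dec (inB y)) as [b|b].
  - destruct (inB_Ap_ex y b) as [[n m] ->]. rewrite hhi_Ap, lift_Ap, hh_Ap.
    destruct (Nat.eq_dec n 0) as [->|nz].
    + unfold Fei; simpl. rewrite lift_Ap. unfold Fe; simpl. auto.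
    + assert (~ DD (Ap (n, m))). { intros [m' E]. apply Ap_inj in E. congruence. }
      assert (t (Ap (n, m)) = Ap (n, m)) by (apply NNPP; intros E; apply H, St, E).
      rewrite H0. unfold Fei; simpl. rewrite even_shi by auto.
      destruct (Nat.even n) eqn:E; simpl; rewrite sh_shi, lift_Ap; unfold Fe; simpl; rewrite E; simpl;
        rewrite ?r1; auto.
  - rewrite (lift_out Fei) by (apply hhi_out; auto). rewrite (proj2 hh_inv), lift_out by auto.
    apply NNPP; intros E. apply b. destruct (St y (fun H => E (eq_sym H))) as [m ->]. apply inB_Ap.
Qed.

Hypothesis Hga : forall k, k <= g (a k).

Lemma a_ge k : k <= a k.
Proof. induction k. lia. pose proof (Ha k (S k) ltac:(lia)). lia. Qed.

Lemma DD_good : good DD.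
Proof.
  split.
  - intros N. exists (Ap (0, N)). split. unfold Ap. pose proof (to_nat_non_decreasing 0 N).
    pose proof (a_ge (to_nat (0, N))). lia. exists N; auto.
  - intros N. exists (g (a N)). split. auto. intros [m E]. apply (Hdisj N (to_nat (0, m))). auto.
Qed.
End Swindle.

Section StepI.
Variables g gi : nat -> nat.
Hypothesis Hg : inv_pair g gi.
Hypothesis Hnf : ~ exists l, forall x, g x <> x -> In x l.

Definition cf M := epsilon (inhabits 0) (fun x => g x <> x /\ M < x /\ M < g x).
Lemma cf_spec M : g (cf M) <> cf M /\ M < cf M /\ M < g (cf M).
Proof.
  unfold cf. apply epsilon_spec. apply NNPP; intros Hn. apply Hnf.
  exists (seq 0 (S M) ++ map gi (seq 0 (S M))). intros x Hx. apply in_or_app.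
  destruct (le_lt_dec x M). left; apply in_seq; lia.
  destruct (le_lt_dec (g x) M). right. rewrite <- (proj1 Hg x). apply in_map, in_seq; lia.
  exfalso; apply Hn; eauto.
Qed.
Fixpoint Mg k := match k with 0 => 0 | S k => Nat.max (cf (Mg k)) (g (cf (Mg k))) end.
Definition aa k := cf (Mg k).
Lemma aa_step k : Mg k < aa k /\ Mg k < g (aa k) /\ aa k <= Mg (S k) /\ g (aa k) <= Mg (S k)
  /\ g (aa k) <> aa k.
Proof. unfold aa. pose proof (cf_spec (Mg k)). cbn [Mg]. repeat split; try lia; tauto. Qed.
Lemma Mg_mono i j : i < j -> Mg (S i) <= Mg j.
Proof. intros H; induction H; auto. pose proof (aa_step m) as (?&?&?&?&?). lia. Qed.
Lemma Mg_ge k : k <= Mg k.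
Proof. induction k; [lia|]. pose proof (aa_step k) as (?&?&?&?&?). lia. Qed.

Lemma aa_mono i j : i < j -> aa i < aa j.
Proof. intros H. pose proof (Mg_mono _ _ H). pose proof (aa_step i) as (?&?&?&?&?). pose proof (aa_step j) as (?&?&?&?&?). lia. Qed.
Lemma aa_disj i j : g (aa i) <> aa j.
Proof.
  intros Eq. pose proof (aa_step i) as (?&?&?&?&?). pose proof (aa_step j) as (?&?&?&?&?).
  destruct (lt_eq_lt_dec i j) as [[Hl|Hl]|Hl].
  - pose proof (Mg_mono _ _ Hl). lia.
  - subst; auto.
  - pose proof (Mg_mono _ _ Hl). lia.
Qed.
Lemma aa_ge k : k <= g (aa k).
Proof. pose proof (Mg_ge k). pose proof (aa_step k) as (?&?&?&?&?). lia. Qed.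
End StepI.

Theorem core g gi : inv_pair g gi -> (~ exists l, forall x, g x <> x -> In x l) ->
  forall u ui, inv_pair u ui -> NC g u.
Proof.
  intros Hg Hnf u ui Hu.
  set (a := aa g).
  assert (Ha : forall i j, i < j -> a i < a j) by (apply (aa_mono g gi); auto).
  assert (Hd : forall i j, g (a i) <> a j) by (apply (aa_disj g gi); auto).
  assert (Hga : forall k, k <= g (a k)) by (apply (aa_ge g gi); auto).
  pose proof (swindle g gi a Hg Ha Hd) as SW.
  pose proof (DD_good g a Ha Hd Hga) as DG.
  destruct (decomp u ui Hu) as (al & ali & be & bei & Al & Be & E & (S1 & G1 & S1a) & (S2 & G2 & S2b)).
  eapply NC_ext. apply (NCcomp g al be).
  - apply (transfer g _ DG SW S1 G1 al ali Al S1a).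
  - apply (transfer g _ DG SW S2 G2 be bei Be S2b).
  - intros; simpl; auto.
Qed.


Section TGroup.
Variable T : Type.

Lemma perm_id : is_perm (fun x : T => x).
Proof. exists (fun x => x); split; auto. Qed.
Lemma perm_comp (f g : T -> T) : is_perm f -> is_perm g -> is_perm (fun x => f (g x)).
Proof.
  intros [fi [f1 f2]] [gi [g1 g2]]. exists (fun x => gi (fi x)); split; intros x.
  rewrite f1, g1; auto. rewrite g2, f2; auto.
Qed.
Lemma perm_inv (f g : T -> T) : (forall x, g (f x) = x) -> (forall x, f (g x) = x) -> is_perm g.
Proof. intros H1 H2. exists f; split; auto. Qed.

Lemma is_perm_subgroup : subgroup (@is_perm T).
Proof.
  split; [|split; [|split]]; auto.
  - apply perm_id.
  - apply perm_comp.
  - intros f g _ H1 H2. apply (perm_inv f g H1 H2).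
Qed.

Lemma gen_incl (A : fset T) : subset A (gen A).
Proof. intros f Af K _ HK. apply HK, Af. Qed.

Lemma gen_subgroup (A : fset T) : (forall f, A f -> is_perm f) -> subgroup (gen A).
Proof.
  intros HA. split; [|split; [|split]].
  - intros f Hf. apply Hf. apply is_perm_subgroup. exact HA.
  - intros K HK _. apply HK.
  - intros f g Hf Hg K HK HAK. apply HK; [apply Hf|apply Hg]; auto.
  - intros f g Hf H1 H2 K HK HAK. apply (proj2 (proj2 (proj2 HK)) f g); auto. apply Hf; auto.
Qed.

Lemma gen_min (A B : fset T) : (forall f, B f -> is_perm f) -> subset A (gen B) ->
  subset (gen A) (gen B).
Proof. intros HB HAB f Hf. apply Hf. apply gen_subgroup; auto. auto. Qed.

Lemma gen_mono (A B : fset T) : subset A B -> subset (gen A) (gen B).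
Proof. intros HAB f Hf K HK HBK. apply Hf; auto. intros h Ah; apply HBK, HAB, Ah. Qed.

Definition conjset (G : fset T) (U : list (T -> T)) : fset T :=
  fun h => exists f finv g, In f U /\
        (forall x, finv (f x) = x) /\ (forall x, f (finv x) = x) /\
        G g /\ h = (fun x => finv (g (f x))).

Lemma conjset_perm G U : subgroup G -> forall h, conjset G U h -> is_perm h.
Proof.
  intros HG h (f & finv & g & _ & f1 & f2 & Gg & ->).
  apply perm_comp. apply (perm_inv f finv f1 f2). apply perm_comp.
  apply HG; auto. apply (perm_inv finv f f2 f1).
Qed.

Lemma cj_to_plain (H G : fset T) : subgroup G -> preceq_cj H G -> preceq H G.
Proof.
  intros HG [U [HU HS]]. exists U. split; auto.
  intros h Hh. apply HS in Hh. revert h Hh. change (subset (gen (conjset G U)) (gen (fun h => G h \/ In h U))).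
  apply gen_min.
  - intros f [Gf|Uf]; [apply HG|apply HU]; auto.
  - intros h (f & finv & g & Uf & f1 & f2 & Gg & ->) K HK HAK.
    destruct HK as (K1 & K2 & K3 & K4).
    assert (Kf : K f) by (apply HAK; auto).
    assert (Kfi : K finv) by (apply (K4 f finv); auto).
    apply (K3 finv (fun x => g (f x))); auto.
Qed.

End TGroup.
Arguments conjset {T}.


Section Transport.
Variable T : Type.
Variables (e : T -> nat) (d : nat -> T).
Hypothesis de : forall x, d (e x) = x.
Hypothesis ed : forall n, e (d n) = n.
Variable G : fset T.
Hypothesis HG : subgroup G.

Lemma conjset_mono U1 U2 : (forall f, In f U1 -> In f U2) ->
  subset (conjset G U1) (conjset G U2).
Proof. intros HU h (f & finv & g & Uf & R). exists f, finv, g. split; auto. Qed.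

Lemma NC_to_T (g : T -> T) (Gg : G g) (g' : nat -> nat) (Hg' : forall y, g' y = e (g (d y))) :
  forall h', NC g' h' -> exists U, (forall u, In u U -> is_perm u) /\
     gen (conjset G U) (fun x => d (h' (e x))).
Proof.
  induction 1 as [f fi [f1 f2]|h hi _ [U [HU Hh]] [h1 h2]|h k _ [U1 [HU1 H1]] _ [U2 [HU2 H2]]].
  - exists [fun x => d (f (e x))]. split.
    + intros u [<-|[]]. exists (fun x => d (fi (e x))); split; intros x; rewrite ed; congruence.
    + apply gen_incl. exists (fun x => d (f (e x))), (fun x => d (fi (e x))), g.
      split; [left; auto|split; [|split; [|split]]]; auto.
      * intros x; rewrite ed, f1; auto.
      * intros x; rewrite ed, f2; auto.
      * apply functional_extensionality; intros x. rewrite Hg'. auto.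
  - exists U. split; auto. apply (proj2 (proj2 (proj2 (gen_subgroup _ _ (conjset_perm _ G U HG)))) _ _ Hh).
    + intros x. rewrite ed, h1; auto.
    + intros x. rewrite ed, h2; auto.
  - exists (U1 ++ U2). split.
    + intros u Hu. apply in_app_or in Hu. destruct Hu; auto.
    + assert (E : (fun x => d (h (k (e x)))) = (fun x => (fun x => d (h (e x))) ((fun x => d (k (e x))) x))).
      { apply functional_extensionality; intros x. rewrite ed. auto. }
      rewrite E. pose proof (proj1 (proj2 (proj2 (gen_subgroup _ _ (conjset_perm _ G (U1 ++ U2) HG))))) as C.
      refine (C (fun x => d (h (e x))) (fun x => d (k (e x))) _ _).
      * revert H1. apply gen_mono, conjset_mono. intros; apply in_or_app; auto.
      * revert H2. apply gen_mono, conjset_mono. intros; apply in_or_app; auto.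
Qed.

Lemma all_in (g : T -> T) : G g -> ~ finitary g ->
  forall u, is_perm u -> exists U, (forall u, In u U -> is_perm u) /\ gen (conjset G U) u.
Proof.
  intros Gg Hnf u [ui [u1 u2]].
  destruct (proj1 HG g Gg) as [gi [g1 g2]].
  set (g' := fun y => e (g (d y))).
  assert (Hg' : inv_pair g' (fun y => e (gi (d y)))).
  { unfold g'; split; intros y; rewrite de; rewrite ?g1, ?g2; auto. }
  assert (nf : ~ exists l, forall x, g' x <> x -> In x l).
  { intros [l Hl]. apply Hnf. split. exists gi; auto. exists (map d l).
    intros x Hx. rewrite <- (de x). apply in_map. apply Hl. unfold g'. rewrite de.
    intros E. apply Hx. rewrite <- (de (g x)), E. auto. }
  assert (Hu' : inv_pair (fun y => e (u (d y))) (fun y => e (ui (d y)))).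
  { split; intros y; rewrite de; rewrite ?u1, ?u2; auto. }
  pose proof (core g' _ Hg' nf _ _ Hu') as Nu.
  destruct (NC_to_T g Gg g' (fun y => eq_refl) _ Nu) as [U [HU HgU]].
  exists U. split; auto.
  replace u with (fun x => d ((fun y => e (u (d y))) (e x))); auto.
  apply functional_extensionality; intros x. rewrite !de. auto.
Qed.

Lemma plain_to_cj (g : T -> T) : G g -> ~ finitary g ->
  forall H, preceq H G -> preceq_cj H G.
Proof.
  intros Gg Hnf H [U0 [HU0 HS]].
  assert (L : forall V0 : list (T -> T), (forall u, In u V0 -> is_perm u) ->
     exists U, (forall u, In u U -> is_perm u) /\ forall u, In u V0 -> gen (conjset G U) u).
  { clear HS HU0. intros V0. induction V0 as [|u V0 IH]; intros HP.
    - exists []. split; intros v Hv; destruct Hv.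
    - destruct IH as [U [HU HI]]. intros; apply HP; right; auto.
      destruct (all_in g Gg Hnf u (HP u (or_introl eq_refl))) as [Uu [HUu Hu]].
      exists (Uu ++ U). split.
      + intros v Hv; apply in_app_or in Hv; destruct Hv; auto.
      + intros v [<-|Hv].
        * revert Hu. apply gen_mono, conjset_mono. intros; apply in_or_app; auto.
        * generalize (HI v Hv). apply gen_mono, conjset_mono. intros; apply in_or_app; auto. }
  destruct (L U0 HU0) as [U [HU HI]].
  exists ((fun x => x) :: U). split.
  - intros v [<-|Hv]; auto. apply perm_id.
  - intros h Hh. apply HS in Hh. revert h Hh.
    change (subset (gen (fun h => G h \/ In h U0)) (gen (conjset G ((fun x => x) :: U)))).
    apply gen_min. apply conjset_perm; auto.
    intros h [Gh|Uh].
    + apply gen_incl. exists (fun x => x), (fun x => x), h. split; [left; auto|]. auto.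
    + generalize (HI h Uh). apply gen_mono, conjset_mono. intros; right; auto.
Qed.
End Transport.


Fixpoint dl (k n : nat) : list nat :=
  match k with 0 => [] | S k => fst (of_nat n) :: dl k (snd (of_nat n)) end.

Lemma dl_surj L : exists n, dl (length L) n = L.
Proof.
  induction L as [|a L [n IH]]. exists 0; auto.
  exists (to_nat (a, n)). cbn [length dl]. rewrite cancel_of_to. simpl. rewrite IH; auto.
Qed.

Lemma in_le_max a l : In a l -> a <= list_max l.
Proof.
  intros H. assert (F : Forall (fun k => k <= list_max l) l) by (apply list_max_le; auto).
  rewrite Forall_forall in F. auto.
Qed.

Section Count.
Variable T : Type.
Variables (e : T -> nat) (d : nat -> T).
Hypothesis de : forall x, d (e x) = x.
Hypothesis ed : forall n, e (d n) = n.

Definition fin_enum (N : nat) : T -> T :=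
  fun x => d (let y := e x in if y <? fst (of_nat N) then nth y (dl (fst (of_nat N)) (snd (of_nat N))) 0 else y).

Lemma fin_enum_cover f : finitary f -> exists N, fin_enum N = f.
Proof.
  intros [_ [l Hl]].
  set (f' := fun y => e (f (d y))).
  set (B := S (list_max (map e l))).
  destruct (dl_surj (map f' (seq 0 B))) as [n Hn].
  rewrite length_map, length_seq in Hn.
  exists (to_nat (B, n)). apply functional_extensionality; intros x.
  unfold fin_enum. rewrite cancel_of_to. cbn [fst snd]. rewrite Hn.
  destruct (Nat.ltb_spec (e x) B) as [Lt|Ge].
  - rewrite nth_indep with (d' := f' 0) by (rewrite length_map, length_seq; auto).
    rewrite map_nth, seq_nth by auto. simpl. unfold f'. rewrite !de. auto.
  - destruct (classic (f x = x)) as [E|E]. rewrite E, de; auto.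
    exfalso. apply Hl in E. apply (in_map e) in E. apply in_le_max in E. unfold B in Ge. lia.
Qed.

Variable U : list (T -> T).
Definition eA (N : nat) : T -> T :=
  if fst (of_nat N) =? 0 then fin_enum (snd (of_nat N)) else nth (snd (of_nat N)) U (fun x => x).

Lemma eA_cover f : finitary f \/ In f U -> exists N, eA N = f.
Proof.
  intros [F|F].
  - destruct (fin_enum_cover f F) as [j Hj]. exists (to_nat (0, j)). unfold eA. rewrite cancel_of_to. auto.
  - destruct (In_nth U f (fun x => x) F) as [j [_ Hj]]. exists (to_nat (1, j)).
    unfold eA. rewrite cancel_of_to. auto.
Qed.

Definition pinv (f : T -> T) : T -> T :=
  epsilon (inhabits (fun x : T => x)) (fun g => (forall x, g (f x) = x) /\ (forall x, f (g x) = x)).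
Lemma pinv_spec f : is_perm f -> (forall x, pinv f (f x) = x) /\ (forall x, f (pinv f x) = x).
Proof. intros H. unfold pinv. apply epsilon_spec. exact H. Qed.

Definition letter (a : nat) : T -> T :=
  if fst (of_nat a) =? 0 then eA (snd (of_nat a)) else pinv (eA (snd (of_nat a))).
Definition flip (a : nat) : nat := to_nat (if fst (of_nat a) =? 0 then 1 else 0, snd (of_nat a)).

Lemma letter_flip a : is_perm (eA (snd (of_nat a))) ->
  forall x, letter (flip a) (letter a x) = x /\ letter a (letter (flip a) x) = x.
Proof.
  intros P x. destruct (pinv_spec _ P) as [p1 p2]. unfold letter, flip. rewrite cancel_of_to. simpl.
  destruct (fst (of_nat a) =? 0); simpl; auto.
Qed.

Fixpoint ev (w : list nat) : T -> T :=
  match w with [] => fun x => x | a :: w => fun x => letter a (ev w x) end.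
Definition valid (w : list nat) := forall a, In a w -> is_perm (eA (snd (of_nat a))).

Lemma ev_app w1 w2 x : ev (w1 ++ w2) x = ev w1 (ev w2 x).
Proof. induction w1; simpl; auto. rewrite IHw1; auto. Qed.

Definition invw (w : list nat) := rev (map flip w).

Lemma invw_ok w : valid w -> forall x, ev (invw w) (ev w x) = x /\ ev w (ev (invw w) x) = x.
Proof.
  induction w as [|a w IH]; intros V x. simpl; auto.
  assert (Va : is_perm (eA (snd (of_nat a)))) by (apply V; left; auto).
  assert (Vw : valid w) by (intros b Hb; apply V; right; auto).
  unfold invw; simpl. fold (invw w). rewrite !ev_app. simpl. split.
  - rewrite (proj1 (letter_flip a Va _)). apply IH; auto.
  - rewrite (proj2 (IH Vw _)). apply letter_flip; auto.
Qed.

Lemma valid_invw w : valid w -> valid (invw w).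
Proof.
  intros V a Ha. unfold invw in Ha. apply in_rev in Ha. apply in_map_iff in Ha.
  destruct Ha as [b [<- Hb]]. unfold flip. rewrite cancel_of_to. simpl. apply V; auto.
Qed.

Definition W (f : T -> T) := exists w, valid w /\ forall x, f x = ev w x.

Lemma W_subgroup : subgroup W.
Proof.
  split; [|split; [|split]].
  - intros f [w [V E]]. exists (ev (invw w)). split; intros x; rewrite ?E; apply invw_ok; auto.
  - exists []. split; auto. intros a [].
  - intros f g [w1 [V1 E1]] [w2 [V2 E2]]. exists (w1 ++ w2). split.
    + intros a Ha. apply in_app_or in Ha. destruct Ha; auto.
    + intros x. rewrite ev_app, E2, E1; auto.
  - intros f g [w [V E]] g1 g2. exists (invw w). split. apply valid_invw; auto.
    intros x. rewrite <- (g1 (ev (invw w) x)). f_equal. rewrite E. symmetry. apply invw_ok; auto.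
Qed.

Lemma A_in_W f : finitary f \/ In f U -> (forall u, In u U -> is_perm u) -> W f.
Proof.
  intros HA HU. destruct (eA_cover f HA) as [N HN].
  exists [to_nat (0, N)]. split.
  - intros a [<-|[]]. rewrite cancel_of_to. simpl. rewrite HN.
    destruct HA as [[P _]|P]; auto.
  - intros x. cbn [ev]. unfold letter. rewrite !cancel_of_to. cbn [fst snd Nat.eqb]. rewrite HN; auto.
Qed.

Definition enumW (M : nat) : T -> T := ev (dl (fst (of_nat M)) (snd (of_nat M))).

Lemma count_lemma (H G : fset T) : subset H (@finitary T) -> (forall u, In u U -> is_perm u) ->
  subset G (gen (fun h => H h \/ In h U)) -> countable_set G.
Proof.
  intros HF HU HG. exists enumW. intros f Gf.
  assert (Wf : W f).
  { apply HG in Gf. apply Gf. apply W_subgroup. intros h [Hh|Hh]; apply A_in_W; auto. }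
  destruct Wf as [w [_ E]]. destruct (dl_surj w) as [n Hn].
  exists (to_nat (length w, n)). unfold enumW. rewrite cancel_of_to. simpl. rewrite Hn.
  apply functional_extensionality; intros x; auto.
Qed.
End Count.


Theorem lemma12p2 (T : Type) (hT : countably_infinite T) (G : fset T) :
  subgroup G ->
  ~ subset G (@finitary T) ->
  (forall H : fset T, subgroup H -> (preceq_cj H G <-> preceq H G)) /\
  (~ countable_set G ->
   forall H : fset T, subgroup H -> (approx_cj H G <-> approx H G)).
Proof.
  intros HG HnG. destruct hT as (e & d & de & ed).
  assert (Ex : exists g, G g /\ ~ finitary g).
  { apply NNPP; intros Hn. apply HnG. intros f Gf. apply NNPP; intros Hf. apply Hn; eauto. }
  destruct Ex as [g [Gg Hg]].
  split.
  - intros H HH. split. apply cj_to_plain; auto.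
    apply (plain_to_cj T e d de ed G HG g Gg Hg).
  - intros Hunc H HH. split.
    + intros [A B]. split; apply cj_to_plain; auto.
    + intros [A B]. split. apply (plain_to_cj T e d de ed G HG g Gg Hg); auto.
      destruct (classic (exists h, H h /\ ~ finitary h)) as [[h [Hh Hnh]]|Hn].
      * apply (plain_to_cj T e d de ed H HH h Hh Hnh); auto.
      * exfalso. apply Hunc. destruct B as [U [HU HS]].
        apply (count_lemma T e d de U H G); auto.
        intros f Hf. apply NNPP; intros Hnf. apply Hn; eauto.
Qed.
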